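(* Let $m\ge n$, let $\mathcal{U}\subseteq\mathbb{R}$, and let $F:\mathcal{U}\rightarrow M_{m\times n}(\mathbb{C})$ be defined by $F(x)=\sum_{k=0}^{p}A_k x^k$, where $A_k\in M_{m\times n}(\mathbb{C})$ for $k=0,1,\dots,p$. Let $\mathcal{Y}(\mathcal{U})=\{x\in\mathcal{U} : F(x)\text{ has repeated singular values}\}$. Then either $\mathcal{Y}(\mathcal{U})=\mathcal{U}$ or $\mathcal{Y}(\mathcal{U})$ is finite.
   Context: $M_{m\times n}(\mathbb{C})$ denotes the set of $m\times n$ complex matrices; throughout $m\ge n$. The singular values of $A\in M_{m\times n}(\mathbb{C})$ are the $n$ nonnegative square roots of the eigenvalues of $A^{\ast}A$, counted with multiplicity; $A$ has repeated singular values if two of these $n$ values coincide. *)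

(* Defs.v *)
From HB Require Import structures.
From mathcomp Require Import all_boot all_order all_algebra.
From mathcomp Require Import complex.
From mathcomp Require Import reals.
Set Implicit Arguments. Unset Strict Implicit. Unset Printing Implicit Defensive.
Import Order.TTheory GRing.Theory Num.Theory.
Local Open Scope ring_scope.
Local Open Scope complex_scope.

Definition ctrmx (R : rcfType) (m n : nat) (A : 'M[R[i]]_(m, n)) : 'M[R[i]]_(n, m) :=
  (map_mx (fun z => z^*) A)^T.

(* A has repeated singular values: listing the n eigenvalues of A^* A with
   multiplicity (the roots of its characteristic polynomial), the n singular
   values (their nonnegative square roots) are not pairwise distinct. *)
Definition repeated_singular_values (R : rcfType) (m n : nat)
    (A : 'M[R[i]]_(m, n)) : Prop :=
  exists rs : seq R[i],
    char_poly (ctrmx A *m A) = \prod_(r <- rs) ('X - r%:P) /\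
    ~~ uniq [seq sqrtC r | r <- rs].

Definition mxpoly_eval (R : rcfType) (m n p : nat)
    (A : nat -> 'M[R[i]]_(m, n)) (x : R) : 'M[R[i]]_(m, n) :=
  \sum_(k < p.+1) ((x%:C) ^+ k) *: A k.

(* Main.v *)
Require Import Defs.
From HB Require Import structures.
From mathcomp Require Import all_boot all_order all_algebra all_field.
From mathcomp Require Import complex.
From mathcomp Require Import reals.
Import Order.TTheory GRing.Theory Num.Theory.
Local Open Scope ring_scope.

Lemma rsv_iff (R : rcfType) (P : {poly R[i]}) (rs : seq R[i]) :
  P = \prod_(r <- rs) ('X - r%:P) ->
  (~~ uniq [seq sqrtC r | r <- rs]) = (resultant P P^`() == 0).
Proof.
move=> HP.
have inj : injective (sqrtC : R[i] -> R[i]).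
  by move=> a b h; rewrite -[a]sqrtCK -[b]sqrtCK h.
rewrite (map_inj_uniq inj) resultant_eq0.
have := separable_prod_XsubC rs; rewrite -HP unlock coprimep_def => <-.
have P0 : P != 0 by rewrite HP; apply/monic_neq0/monic_prod_XsubC.
have : gcdp P P^`() != 0 by rewrite gcdp_eq0 negb_and P0.
rewrite -size_poly_gt0.
by case: (size _) => [|[|k]].
Qed.
Section S.
Variables (R : realType) (m n p : nat) (A : nat -> 'M[R[i]]_(m, n)).
Local Notation C := R[i].

Definition G : 'M[{poly C}]_(m, n) := \sum_(k < p.+1) 'X^k *: map_mx polyC (A k).
Definition Gs : 'M[{poly C}]_(n, m) := \sum_(k < p.+1) 'X^k *: map_mx polyC (ctrmx (A k)).

Lemma evalG (x : R) : map_mx (horner_eval (real_complex R x)) G = mxpoly_eval p A x.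
Proof.
apply/matrixP=> i j; rewrite !mxE /G /mxpoly_eval summxE rmorph_sum.
apply: (big_rec2 (fun a (M : 'M_(m,n)) => a = M i j)); first by rewrite mxE.
move=> k a M _ ->; rewrite !mxE /= horner_evalE hornerE hornerXn hornerC.
by [].
Qed.

Lemma evalGs (x : R) : map_mx (horner_eval (real_complex R x)) Gs = ctrmx (mxpoly_eval p A x).
Proof.
apply/matrixP=> i j; rewrite !mxE /Gs /mxpoly_eval summxE rmorph_sum.
apply: (big_rec2 (fun a (M : 'M_(m,n)) => a = conjc (M j i))); first by rewrite mxE rmorph0.
move=> k a M _ ->; rewrite !mxE /= horner_evalE hornerE hornerXn hornerC.
by rewrite rmorphD rmorphM rmorphXn /= oppr0.
Qed.

Definition Q := char_poly (Gs *m G).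

Lemma charQ (x : R) : map_poly (horner_eval (real_complex R x)) Q
   = char_poly (ctrmx (mxpoly_eval p A x) *m mxpoly_eval p A x).
Proof. by rewrite /Q map_char_poly map_mxM evalG evalGs. Qed.

Lemma leadQ' n' : n = n'.+1 -> lead_coef Q^`() = n%:R.
Proof.
move=> En.
have sQ : size Q = n'.+2 by rewrite /Q size_char_poly En.
have mQ : lead_coef Q = 1 by apply/monicP; exact: char_poly_monic.
have cQ : Q^`()`_n' = n%:R.
  by rewrite coef_deriv -mQ lead_coefE sQ En.
have nz : (n%:R : {poly C}) != 0 by rewrite -polyC_natr polyC_eq0 pnatr_eq0 En.
have sQ' : size Q^`() = n'.+1.
  apply/eqP; rewrite eqn_leq -ltnS -sQ lt_size_deriv ?sQ //=; last first.
    by rewrite -size_poly_eq0 sQ.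
  rewrite ltnNge; apply/negP => h; move: nz; rewrite -cQ nth_default //.
  by rewrite eqxx.
by rewrite lead_coefE sQ' /= cQ.
Qed.

End S.

Theorem theorem3p9 (R : realType) (m n p : nat) (hmn : (n <= m)%N)
    (U : R -> Prop) (A : nat -> 'M[R[i]]_(m, n)) :
  (* Y(U) = U *)
  (forall x, U x -> repeated_singular_values (mxpoly_eval p A x))
  \/ (* Y(U) finite *)
  (exists s : seq R, forall x,
        U x -> repeated_singular_values (mxpoly_eval p A x) -> x \in s).
Proof.
have rsv_res : forall (M : 'M[R[i]]_(m, n)), repeated_singular_values M <->
    resultant (char_poly (ctrmx M *m M)) (char_poly (ctrmx M *m M))^`() = 0.
  move=> M; split.
    by move=> [rs [Hrs Hu]]; apply/eqP; rewrite -(@rsv_iff _ _ _ Hrs).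
  move=> H0.
  have [rs Hrs] := closed_field_poly_normal (char_poly (ctrmx M *m M)).
  rewrite (monicP (char_poly_monic _)) scale1r in Hrs.
  by exists rs; split => //; rewrite (@rsv_iff _ _ _ Hrs) H0.
clear hmn; case: n A rsv_res => [|n'] A rsv_res.
  right; exists [::] => x _ /rsv_res.
  have -> : char_poly (ctrmx (mxpoly_eval p A x) *m mxpoly_eval p A x) = 1.
    by rewrite /char_poly det_mx00.
  by move/eqP; rewrite resultant_eq0 derivC gcdp0 size_poly1.
set D := resultant (@Q R m n'.+1 p A) (@Q R m n'.+1 p A)^`().
have HD : forall x : R, (D.[real_complex R x] == 0) =
    (resultant (char_poly (ctrmx (mxpoly_eval p A x) *m mxpoly_eval p A x))
       (char_poly (ctrmx (mxpoly_eval p A x) *m mxpoly_eval p A x))^`() == 0).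
  move=> x; rewrite -charQ deriv_map -map_resultant //.
    by rewrite (monicP (char_poly_monic _)) rmorph1 oner_eq0.
  by rewrite (@leadQ' R m n'.+1 p A n' erefl) rmorph_nat pnatr_eq0.
have [D0|Dn0] := eqVneq D 0.
  left => x _; apply/rsv_res; apply/eqP; rewrite -HD D0 horner0.
  by [].
right.
have [rD HrD] := closed_field_poly_normal D.
exists [seq complex.Re z | z <- rD] => x _ /rsv_res /eqP.
rewrite -HD HrD hornerZ mulf_eq0 lead_coef_eq0 (negbTE Dn0) /=.
rewrite horner_prod prodf_seq_eq0 => /hasP [z zin].
rewrite hornerXsubC subr_eq0 => /eqP Ez.
by apply/mapP; exists z => //; rewrite -Ez.
Qed.
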